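(* Let $G=(V,E)$ be a finite simple graph of order at least $3$ in which every connected component has order at least $3$, let $M\subset V$ be any set of (marked) vertices, and let $\mathcal{G}$ be an Abelian group with $|\mathcal{G}|\geq \Delta(G)+\mathrm{col}(G)-1$. Then there exists a labeling $f\colon E\to\mathcal{G}\setminus\{0\}$ such that $w_f(v)\neq 0$ for every $v\in M$ and $w_f(u)\neq w_f(v)$ for every edge $uv\in E$ with $u,v\notin M$.
   Context: $w_f(v)=\sum_{u\in N(v)} f(uv)$ (sum in $\mathcal{G}$) is the weighted degree of $v$. $\Delta(G)$ is the maximum degree of $G$. The coloring number $\mathrm{col}(G)$ is the least integer $k$ such that every subgraph of $G$ has minimum degree less than $k$ (equivalently, the vertices can be ordered so that each has at most $k-1$ neighbours preceding it). *)

(* Defs.v *)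
From mathcomp Require Import all_boot all_order all_algebra.
Set Implicit Arguments. Unset Strict Implicit. Unset Printing Implicit Defensive.
Import GRing.Theory.

Definition simple_graph (T : finType) (e : rel T) : Prop :=
  symmetric e /\ irreflexive e.

Definition deg (T : finType) (e : rel T) (v : T) : nat := #|[set u | e v u]|.

Definition maxdeg (T : finType) (e : rel T) : nat := \max_(v : T) deg e v.

Definition is_subgraph (T : finType) (e : rel T) (S : {set T}) (F : rel T) : Prop :=
  S != set0 /\ symmetric F /\ (forall x y, F x y -> e x y /\ x \in S /\ y \in S).

Definition every_subgraph_mindeg_lt (T : finType) (e : rel T) (k : nat) : Prop :=
  forall (S : {set T}) (F : rel T), is_subgraph e S F ->
    exists2 x, x \in S & #|[set y in S | F x y]| < k.

Definition is_coloring_number (T : finType) (e : rel T) (c : nat) : Prop :=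
  every_subgraph_mindeg_lt e c /\
  (forall k, every_subgraph_mindeg_lt e k -> c <= k).

Definition wdeg (T : finType) (G : zmodType) (e : rel T) (f : {set T} -> G) (v : T) : G :=
  (\sum_(u | e v u) f [set v; u])%R.

(* Main.v *)
Require Import Defs.
From mathcomp Require Import all_boot all_order all_algebra.
From mathcomp Require Import zify.
Set Implicit Arguments. Unset Strict Implicit. Unset Printing Implicit Defensive.
Import GRing.Theory.

Section Main.
Variables (T : finType) (e : rel T) (G : zmodType) (M : {set T}) (k : nat).
Hypothesis esym : symmetric e.
Hypothesis eirr : irreflexive e.
Hypothesis comp3 : forall x : T, 3 <= #|[set y | connect e x y]|.
Variables (r : T -> nat) (N : nat).
Hypothesis r_inj : injective r.
Hypothesis r_lt : forall v, r v < N.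
Hypothesis back : forall v, #|[set z | e v z & r z < r v]| < k.
Variable s : seq G.
Variable x0 : T.
Hypothesis s_uniq : uniq s.
Hypothesis s_size : maxdeg e + k - 1 <= size s.

Lemma e_neq u v : e u v -> u != v.
Proof. by move=> H; apply/eqP=> E; subst; rewrite eirr in H. Qed.

Lemma e_rneq u v : e u v -> r u != r v.
Proof. move=> H; apply/eqP=> E; have := e_neq H; by rewrite (r_inj E) eqxx. Qed.

Lemma small_comp u x : (forall z, e u z -> z = x) -> (forall z, e x z -> z = u) -> False.
Proof.
move=> Hu Hx.
have cl : closed e (mem [set u; x]).
  move=> a b eab; rewrite !inE.
  have H1 : forall a b, e a b -> (a == u) || (a == x) -> (b == u) || (b == x).
    move=> a' b' e' /orP[] /eqP E; subst a'.
    - by rewrite (Hu _ e') eqxx orbT.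
    - by rewrite (Hx _ e') eqxx.
  apply/idP/idP; first exact: H1.
  by apply: H1; rewrite esym.
have : [set y | connect e u y] \subset [set u; x].
  apply/subsetP=> y; rewrite inE => cy.
  by rewrite -(closed_connect cl cy) !inE eqxx.
move/subset_leq_card; rewrite cards2.
have := comp3 u. case: (u != x); lia.
Qed.

Lemma has_nb u : exists x, e u x.
Proof.
case: (pickP (e u)) => [x Hx|H]; first by exists x.
exfalso; apply: (@small_comp u u) => z; by rewrite H.
Qed.

Lemma deg_le1 p o z : #|[set u | e p u]| <= 1 -> e p o -> e p z -> z = o.
Proof.
move=> /card_le1_eqP H epo epz; apply: H; by rewrite inE.
Qed.

Lemma deg_max v : deg e v <= maxdeg e.
Proof. rewrite /maxdeg. exact: (@leq_bigmax T (deg e) v). Qed.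

Lemma maxdeg_ge2 : 2 <= maxdeg e.
Proof.
have [x ux] := has_nb x0.
case: (leqP 2 (deg e x0)) => h0; first exact: leq_trans h0 (deg_max _).
case: (leqP 2 (deg e x)) => h1; first exact: leq_trans h1 (deg_max _).
exfalso; apply: (@small_comp x0 x) => z ez.
- by apply: (deg_le1 _ ux ez); rewrite -ltnS.
- by apply: (deg_le1 _ _ ez); [rewrite -ltnS | rewrite esym].
Qed.


Definition eid u v := minn (r u) (r v) * N + maxn (r u) (r v).

Lemma eidC u v : eid u v = eid v u.
Proof. by rewrite /eid minnC maxnC. Qed.

Lemma eid_inj u v u' v' : e u v -> e u' v' -> eid u v = eid u' v' ->
  (u = u' /\ v = v') \/ (u = v' /\ v = u').
Proof.
move=> euv euv' E.
have hN : 0 < N by have := r_lt u; lia.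
have b1 : maxn (r u) (r v) < N by rewrite gtn_max !r_lt.
have b2 : maxn (r u') (r v') < N by rewrite gtn_max !r_lt.
have Ed : eid u v %/ N = eid u' v' %/ N by rewrite E.
have Em : eid u v %% N = eid u' v' %% N by rewrite E.
rewrite /eid !divnMDl // !divn_small // !addn0 in Ed.
rewrite /eid !modnMDl !modn_small // in Em.
have n1 := e_rneq euv; have n2 := e_rneq euv'.
have [[h1 h2]|[h1 h2]] : (r u = r u' /\ r v = r v') \/ (r u = r v' /\ r v = r u') by lia.
- by left; split; apply: r_inj.
- by right; split; apply: r_inj.
Qed.

Lemma eid_lt c d a b : minn (r c) (r d) < minn (r a) (r b) -> eid c d < eid a b.
Proof.
move=> H; rewrite /eid.
have b1 : maxn (r c) (r d) < N by rewrite gtn_max !r_lt.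
set m1 := minn (r c) (r d) in H b1 *; set m2 := minn (r a) (r b) in H *.
set x1 := maxn _ _ in b1 *; set x2 := maxn _ _.
nia.
Qed.

Lemma eid_bound u v : eid u v < N * N.
Proof.
rewrite /eid.
have b1 : maxn (r u) (r v) < N by rewrite gtn_max !r_lt.
have b2 : minn (r u) (r v) < N by rewrite gtn_min !r_lt.
set m1 := minn _ _ in b2 *; set x1 := maxn _ _ in b1 *.
nia.
Qed.

Definition fin t v := [forall z, e v z ==> (eid v z < t)].
Definition oth t u x := [forall z, (e u z && (z != x)) ==> (eid u z < t)].
Definition pf t u x := oth t u x && oth t x u.
Definition simul u x := [&& e u x, [forall z, e u z ==> (eid u z <= eid u x)] &
   [forall z, e x z ==> (eid x z <= eid u x)]].
Definition Wo (f : {set T} -> G) p o := (\sum_(u | e p u && (u != o)) f [set p; u])%R.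

Definition Inv t (f : {set T} -> G) : Prop :=
 [/\ (forall u v, e u v -> eid u v < t -> f [set u; v] != 0%R),
     (forall v, fin t v -> v \in M -> wdeg e f v != 0%R),
     (forall u v, e u v -> fin t u -> fin t v -> u \notin M -> v \notin M -> wdeg e f u != wdeg e f v) &
     (forall u x, simul u x -> pf t u x -> wdeg e f u != wdeg e f x)].

Lemma simulC u x : simul u x = simul x u.
Proof.
rewrite /simul (esym x u); case: (e u x) => //=.
rewrite andbC; congr (_ && _); apply: eq_forallb => z.
- by rewrite (eidC x u).
- by rewrite (eidC u x).
Qed.

Lemma pfC t u x : pf t u x = pf t x u.
Proof. by rewrite /pf andbC. Qed.

Lemma simul_uniq p x1 x2 : simul p x1 -> simul p x2 -> x1 = x2.
Proof.
move=> /and3P[e1 /forallP h1 _] /and3P[e2 /forallP h2 _].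
have := implyP (h1 x2) e2; have := implyP (h2 x1) e1 => l1 l2.
have E : eid p x2 = eid p x1 by apply/eqP; rewrite eqn_leq l1 l2.
by case: (eid_inj e2 e1 E) => [[_ ->]|[-> ->]].
Qed.

Lemma base : Inv 0 (fun _ => 0%R).
Proof.
have nf v : ~~ fin 0 v.
  have [x ex] := has_nb v; apply/negP => /forallP /(_ x); by rewrite ex.
split=> //.
- by move=> v; rewrite (negbTE (nf v)).
- by move=> u v _; rewrite (negbTE (nf u)).
move=> u x /and3P[eux _ _] /andP[/forallP h1 /forallP h2]; exfalso.
apply: (@small_comp u x) => z ez; apply/eqP; apply: contraT => nz.
- by have := implyP (h1 z); rewrite ez nz => /(_ isT).
- by have := implyP (h2 z); rewrite ez nz => /(_ isT).
Qed.

Lemma noedge_step t f : (forall u v, e u v -> eid u v != t) -> Inv t f -> Inv t.+1 f.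
Proof.
move=> H [I1 I2 I3 I4].
have lt u v : e u v -> (eid u v < t.+1) = (eid u v < t).
  by move=> euv; rewrite ltnS leq_eqVlt (negbTE (H _ _ euv)).
have F v : fin t.+1 v = fin t v.
  apply: eq_forallb => z; case ez: (e v z) => //=; exact: lt.
have O u x : oth t.+1 u x = oth t u x.
  apply: eq_forallb => z; case ez: (e u z) => //=; by rewrite lt.
split.
- by move=> u v euv; rewrite lt //; apply: I1.
- by move=> v; rewrite F; apply: I2.
- by move=> u v euv; rewrite !F; apply: I3.
- by move=> u x su; rewrite /pf !O; apply: I4.
Qed.

Lemma pigeon (L : seq G) : 1 + size [seq x <- L | x != 0%R] < size s ->
  exists a, [/\ a \in s, a != 0%R & a \notin L].
Proof.
move=> H.
case: (boolP (has (fun a => (a != 0%R) && (a \notin L)) s)) => [/hasP[a ains /andP[h1 h2]]|].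
  by exists a.
move/hasPn => H2; exfalso.
have : size s <= size (0%R :: [seq x <- L | x != 0%R]).
  apply: uniq_leq_size => // a /H2; rewrite negb_and !negbK inE mem_filter.
  by case: (a == 0%R) => //= ->.
rewrite /=. move=> HH. move: H. by rewrite add1n ltnNge HH.
Qed.

Lemma back_pos v z : e v z -> r z < r v -> 0 < #|[set z | e v z & r z < r v]|.
Proof. by move=> ez lt; apply/card_gt0P; exists z; rewrite inE ez lt. Qed.

Lemma k_ge2 : 2 <= k.
Proof.
have [x ex] := has_nb x0.
have ne := e_rneq ex.
case: (ltngtP (r x0) (r x)) => h; last by rewrite h eqxx in ne.
- have := back x; have := back_pos (z := x0) _ h; rewrite esym ex => /(_ isT); lia.
- have := back x0; have := back_pos ex h; lia.
Qed.


Section Step.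
Variables (q y : T) (t : nat) (f : {set T} -> G).
Hypothesis eqy : e q y.
Hypothesis rqy : r q < r y.
Hypothesis teq : eid q y = t.
Hypothesis Hinv : Inv t f.

Definition upd (a : G) : {set T} -> G := fun E => if E == [set q; y] then a else f E.

Definition endp p o := ((p == q) && (o == y)) || ((p == y) && (o == q)).

Lemma qy_neq : q != y.
Proof. exact: e_neq eqy. Qed.

Lemma edge_t u v : e u v -> eid u v = t -> endp u v.
Proof.
move=> euv E; rewrite -teq in E.
by case: (eid_inj euv eqy E) => [[-> ->]|[-> ->]]; rewrite /endp !eqxx ?orbT.
Qed.

Lemma endp_e p o : endp p o -> e p o.
Proof. by case/orP=> /andP[/eqP -> /eqP ->]; rewrite // esym. Qed.

Lemma endp_set p o : endp p o -> [set p; o] = [set q; y].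
Proof. by case/orP=> /andP[/eqP -> /eqP ->]; rewrite // setUC. Qed.

Lemma endp_eid p o : endp p o -> eid p o = t.
Proof. by case/orP=> /andP[/eqP -> /eqP ->]; rewrite // eidC. Qed.

Lemma endpC p o : endp p o = endp o p.
Proof. by rewrite /endp orbC andbC (andbC (o == y)). Qed.

Lemma endp_other p o x : endp p o -> endp p x -> x = o.
Proof.
have := qy_neq; rewrite /endp => ne.
case/orP=> /andP[/eqP E1 /eqP E2]; case/orP=> /andP[/eqP E3 /eqP E4]; subst => //;
  by rewrite ?E3 ?E1 eqxx in ne.
Qed.

Lemma notend_ne u v : e u v -> u != q -> u != y -> eid u v != t.
Proof.
move=> euv nq ny; apply/eqP => E; have := edge_t euv E.
by rewrite /endp (negbTE nq) (negbTE ny).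
Qed.

Lemma fin_other v : v != q -> v != y -> fin t.+1 v = fin t v.
Proof.
move=> nq ny; apply: eq_forallb => z; case ez: (e v z) => //=.
by rewrite ltnS leq_eqVlt (negbTE (notend_ne ez nq ny)).
Qed.

Lemma oth_other u x : u != q -> u != y -> oth t.+1 u x = oth t u x.
Proof.
move=> nq ny; apply: eq_forallb => z; case ez: (e u z) => //=.
by rewrite ltnS leq_eqVlt (negbTE (notend_ne ez nq ny)).
Qed.

Lemma set_ne v u : v != q -> v != y -> [set v; u] != [set q; y].
Proof.
move=> nq ny; apply/eqP => E.
have : v \in [set q; y] by rewrite -E !inE eqxx.
by rewrite !inE (negbTE nq) (negbTE ny).
Qed.

Lemma w_other a v : v != q -> v != y -> wdeg e (upd a) v = wdeg e f v.
Proof.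
move=> nq ny; apply: eq_bigr => u _; by rewrite /upd (negbTE (set_ne _ nq ny)).
Qed.

Lemma w_split g p o : e p o -> wdeg e g p = (Wo g p o + g [set p; o])%R.
Proof. by move=> epo; rewrite /wdeg (bigD1 o) //= addrC. Qed.

Lemma Wo_upd a p o : endp p o -> Wo (upd a) p o = Wo f p o.
Proof.
move=> hp; apply: eq_bigr => u /andP[epu nuo].
rewrite /upd -(endp_set hp); case: eqP => // E.
have : u \in [set p; o] by rewrite -E !inE eqxx orbT.
by rewrite !inE (negbTE nuo) eq_sym (negbTE (e_neq epu)).
Qed.

Lemma w_end a p o : endp p o -> wdeg e (upd a) p = (Wo f p o + a)%R.
Proof.
move=> hp; rewrite (w_split _ (endp_e hp)) Wo_upd //.
by rewrite /upd (endp_set hp) eqxx.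
Qed.

Lemma w_end_old p o : endp p o -> wdeg e f p = (Wo f p o + f [set q; y])%R.
Proof. by move=> hp; rewrite (w_split _ (endp_e hp)) (endp_set hp). Qed.

Definition Lend p o : seq G :=
  if fin t.+1 p then
    (if p \in M then [:: (- Wo f p o)%R]
     else [seq (wdeg e f v - Wo f p o)%R | v <- enum [set v | e p v && (v != o) && fin t v && (v \notin M)]])
  else [::].

Definition Pend p o : seq G :=
  [seq (wdeg e f x - Wo f p o)%R | x <- enum [set x | simul p x && (x != o) && pf t.+1 p x]].

Lemma G0 a p o : endp p o -> wdeg e f p != wdeg e f o -> wdeg e (upd a) p != wdeg e (upd a) o.
Proof.
move=> hp; have ho : endp o p by rewrite endpC.
rewrite (w_end a hp) (w_end a ho) (w_end_old hp) (w_end_old ho). apply: contra. move=> /eqP E. by rewrite (addIr _ E).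
Qed.

Lemma G1 a p o : endp p o -> a \notin Lend p o -> fin t.+1 p -> p \in M -> wdeg e (upd a) p != 0%R.
Proof.
move=> hp; rewrite /Lend => + fp pM; rewrite fp pM inE => na.
by rewrite (w_end a hp) addrC addr_eq0.
Qed.

Lemma G2 a p o v : endp p o -> a \notin Lend p o -> fin t.+1 p -> p \notin M ->
  e p v -> v != o -> fin t v -> v \notin M -> wdeg e (upd a) p != wdeg e (upd a) v.
Proof.
move=> hp; rewrite /Lend => + fp pM; rewrite fp (negbTE pM) => na epv nvo fv vM.
have nvp : v != p by rewrite eq_sym e_neq.
have [nq ny] : v != q /\ v != y.
  by case/orP: hp nvp nvo => /andP[/eqP -> /eqP ->].
rewrite (w_end a hp) w_other //; apply: contra na => /eqP E.
apply/mapP; exists v; first by rewrite mem_enum inE epv nvo fv vM.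
by rewrite -E addrC addKr.
Qed.

Lemma G3 a p o x : endp p o -> a \notin Pend p o -> simul p x -> x != o -> pf t.+1 p x ->
  wdeg e (upd a) p != wdeg e (upd a) x.
Proof.
move=> hp na sx nxo px.
have nxp : x != p by case/and3P: sx => epx _ _; rewrite eq_sym e_neq.
have [nq ny] : x != q /\ x != y.
  by case/orP: hp nxp nxo => /andP[/eqP -> /eqP ->].
rewrite (w_end a hp) w_other //; apply: contra na => /eqP E.
apply/mapP; exists x; first by rewrite mem_enum inE sx nxo px.
by rewrite -E addrC addKr.
Qed.


Lemma lt_end p o z : endp p o -> e p z -> z != o -> eid p z < t.+1 -> eid p z < t.
Proof.
move=> hp epz nzo; rewrite ltnS leq_eqVlt; case: eqP => //= E.
by have := endp_other hp (edge_t epz E) => Ez; rewrite Ez eqxx in nzo.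
Qed.

Lemma oth_end p o : endp p o -> oth t.+1 p o -> oth t p o.
Proof.
move=> hp /forallP H; apply/forallP => z; apply/implyP => /andP[epz nzo].
by apply: (lt_end hp epz nzo); apply: (implyP (H z)); rewrite epz nzo.
Qed.

Lemma pf_end p o : endp p o -> pf t.+1 p o -> pf t p o.
Proof.
move=> hp /andP[h1 h2]; rewrite /pf (oth_end hp h1) /=.
by apply: oth_end h2; rewrite endpC.
Qed.

Lemma simul_end p o : endp p o -> fin t.+1 p -> fin t.+1 o -> simul p o.
Proof.
move=> hp /forallP f1 /forallP f2; rewrite /simul (endp_e hp) /= (endp_eid hp).
apply/andP; split; apply/forallP => z; apply/implyP => ez.
- by rewrite -ltnS; apply: (implyP (f1 z)).
- by rewrite -ltnS; apply: (implyP (f2 z)).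
Qed.

Lemma pf_fin p o : endp p o -> fin t.+1 p -> fin t.+1 o -> pf t.+1 p o.
Proof.
move=> hp /forallP f1 /forallP f2; apply/andP; split; apply/forallP => z;
  apply/implyP => /andP[ez _]; [exact: (implyP (f1 z)) | exact: (implyP (f2 z))].
Qed.

Lemma endp_qy : endp q y. Proof. by rewrite /endp !eqxx. Qed.
Lemma endp_yq : endp y q. Proof. by rewrite /endp !eqxx orbT. Qed.

Lemma endp_notin p o v : endp p o -> v != p -> v != o -> v != q /\ v != y.
Proof. by case/orP=> /andP[/eqP -> /eqP ->] => a b; split. Qed.

Section Good.
Variable a : G.
Hypothesis a0 : a != 0%R.
Hypothesis hL : forall p o, endp p o -> a \notin Lend p o.
Hypothesis hP : forall p o, endp p o -> a \notin Pend p o.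

Lemma I3end p o v : endp p o -> e p v -> fin t.+1 p -> fin t.+1 v -> p \notin M -> v \notin M ->
  wdeg e (upd a) p != wdeg e (upd a) v.
Proof.
case: Hinv => [I1 I2 I3 I4] hp epv fp fv pM vM.
case: (v =P o) => [Evo|nvo].
  subst v; apply: G0 => //; apply: I4; first exact: simul_end.
  by apply: pf_end => //; apply: pf_fin.
have nvp : v != p by rewrite eq_sym e_neq.
have [nq ny] := endp_notin hp nvp (introN eqP nvo).
apply: (G2 hp (hL hp)) => //; first exact/eqP.
by rewrite -fin_other.
Qed.

Lemma I4end p o x : endp p o -> simul p x -> pf t.+1 p x -> wdeg e (upd a) p != wdeg e (upd a) x.
Proof.
case: Hinv => [I1 I2 I3 I4] hp sx px.
case: (x =P o) => [Exo|nxo].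
  by subst x; apply: G0 => //; apply: I4 => //; apply: pf_end.
by apply: (G3 hp (hP hp)) => //; apply/eqP.
Qed.

Lemma inv_step : Inv t.+1 (upd a).
Proof.
case: Hinv => [I1 I2 I3 I4]; split.
- move=> u v euv lt; rewrite /upd; case: ifP => [_|/eqP ne]; first by [].
  case: (eid u v =P t) => [E|ne2].
    by exfalso; apply: ne; apply: endp_set; exact: edge_t euv E.
  by apply: I1 => //; move: lt; rewrite ltnS leq_eqVlt => /orP[/eqP|//].
- move=> v fv vM.
  case: (v =P q) => [Ev|/eqP nq]; first by subst v; apply: (G1 endp_qy (hL endp_qy)).
  case: (v =P y) => [Ev|/eqP ny]; first by subst v; apply: (G1 endp_yq (hL endp_yq)).
  rewrite w_other //.
  by apply: I2 => //; rewrite -fin_other.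
- move=> u v euv fu fv uM vM.
  case: (u =P q) => [Eu|nq]; first by subst u; apply: (I3end endp_qy).
  case: (u =P y) => [Eu|ny]; first by subst u; apply: (I3end endp_yq).
  case: (v =P q) => [Ev|/eqP nq']; first by subst v; rewrite eq_sym; apply: (I3end endp_qy) => //; rewrite esym.
  case: (v =P y) => [Ev|/eqP ny']; first by subst v; rewrite eq_sym; apply: (I3end endp_yq) => //; rewrite esym.
  move/eqP: nq => nq; move/eqP: ny => ny.
  rewrite !w_other //.
  by apply: I3 => //; rewrite -fin_other.
- move=> u x sx px.
  case: (u =P q) => [Eu|nq]; first by subst u; apply: (I4end endp_qy).
  case: (u =P y) => [Eu|ny]; first by subst u; apply: (I4end endp_yq).
  rewrite simulC in sx; rewrite pfC in px.
  case: (x =P q) => [Ev|/eqP nq']; first by subst x; rewrite eq_sym; apply: (I4end endp_qy).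
  case: (x =P y) => [Ev|/eqP ny']; first by subst x; rewrite eq_sym; apply: (I4end endp_yq).
  move/eqP: nq => nq; move/eqP: ny => ny.
  rewrite !w_other //.
  rewrite simulC in sx; rewrite pfC /pf !oth_other // in px.
  by apply: I4.
Qed.

End Good.


Lemma size_filter_le (L : seq G) : size [seq x <- L | x != 0%R] <= size L.
Proof. by rewrite size_filter count_size. Qed.

Lemma C1 p o : endp p o -> fin t.+1 p -> size [seq x <- Lend p o | x != 0%R] <= deg e p - 1.
Proof.
move=> hp fp; rewrite /Lend fp; case: ifP => pM.
  case: (leqP 2 (deg e p)) => h.
    by apply: leq_trans (size_filter_le _) _; rewrite /=; lia.
  have -> : Wo f p o = 0%R.
    rewrite /Wo big_pred0 // => u; case epu: (e p u) => //=.
    by rewrite (deg_le1 _ (endp_e hp) epu) ?eqxx //; rewrite /deg in h; lia.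
  by rewrite oppr0 /= eqxx.
apply: leq_trans (size_filter_le _) _; rewrite size_map -cardE.
have : #|[set u | e p u]| = (o \in [set u | e p u]) + #|[set u | e p u] :\ o| by apply: cardsD1.
rewrite inE (endp_e hp) /deg => ->.
rewrite add1n subSS subn0; apply: subset_leq_card; apply/subsetP => v.
by rewrite !inE => /andP[/andP[/andP[-> ->] _] _].
Qed.

Lemma C2 p o : ~~ fin t.+1 p -> Lend p o = [::].
Proof. by move=> h; rewrite /Lend (negbTE h). Qed.

Lemma C3 p o : size (Pend p o) <= 1.
Proof.
rewrite size_map -cardE; apply/card_le1_eqP => x1 x2.
rewrite !inE => /andP[/andP[s1 _] _] /andP[/andP[s2 _] _]; exact: simul_uniq s2 s1.
Qed.

Lemma C4 p o : endp p o -> fin t.+1 p -> Pend p o = [::].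
Proof.
move=> hp /forallP fp; rewrite /Pend.
suff -> : [set x | simul p x && (x != o) && pf t.+1 p x] = set0 by rewrite enum_set0.
apply/setP => x; rewrite !inE; apply/negbTE/negP => /andP[/andP[sx nxo] _].
case/and3P: sx => epx /forallP hx _.
have h1 := implyP (hx o) (endp_e hp); rewrite (endp_eid hp) in h1.
have h2 := implyP (fp x) epx.
have E : eid p x = t by apply/eqP; rewrite eqn_leq h1 -ltnS h2.
by rewrite (endp_other hp (edge_t epx E)) eqxx in nxo.
Qed.

Lemma gt_t u z : r q < r u -> r u <= r z -> e u z -> t < eid u z.
Proof.
move=> h1 h2 euz; rewrite -teq; apply: eid_lt.
have := e_rneq euz; have := r_lt y; lia.
Qed.

Lemma C5 : fin t.+1 y -> deg e y < k.
Proof.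
move=> /forallP fy.
have -> : deg e y = #|[set z | e y z & r z < r y]|.
  rewrite /deg; apply: eq_card => z; rewrite !inE.
  case ez: (e y z) => //=; symmetry.
  case: (ltngtP (r z) (r y)) => // h.
  - have := gt_t (u := y) (z := z) rqy (ltnW h) ez.
    have := implyP (fy z) ez; lia.
  - by have := e_rneq ez; rewrite h eqxx.
exact: back.
Qed.

Lemma C6 : k <= 2 -> size [seq x <- Pend y q | x != 0%R] = 0.
Proof.
move=> hk.
have b1 v z1 z2 : e v z1 -> r z1 < r v -> e v z2 -> r z2 < r v -> z1 = z2.
  move=> e1 l1 e2 l2; have := back v => hb.
  have /card_le1_eqP H : #|[set z | e v z & r z < r v]| <= 1 by lia.
  by apply: H; rewrite inE ?e1 ?l1 ?e2 ?l2.
have H : forall z, z \in Pend y q -> z = 0%R.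
  move=> z /mapP[x]; rewrite mem_enum inE => /andP[/andP[sx nxq] /andP[o1 o2]] ->.
  have eyx : e y x by case/and3P: sx.
  have ryx : r y < r x.
    case: (ltngtP (r x) (r y)) => // h.
    - by have := b1 y x q eyx h _ rqy; rewrite esym eqy => /(_ isT) E; rewrite E eqxx in nxq.
    - by have := e_rneq eyx; rewrite h eqxx.
  have -> : Wo f y q = f [set y; x].
    rewrite /Wo (big_pred1 x) // => u /=.
    case: (u =P x) => [->|/eqP nux]; first by rewrite eyx nxq.
    case eu: (e y u) => //=; apply/negbTE; rewrite negbK; apply/eqP.
    have lt := implyP ((forallP o1) u); rewrite eu nux in lt; have {}lt := lt isT.
    case: (ltngtP (r u) (r y)) => h.
    - by apply: (b1 y) => //; rewrite esym.
    - by have := gt_t (u := y) (z := u) rqy (ltnW h) eu; lia.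
    - by have := e_rneq eu; rewrite h eqxx.
  have -> : wdeg e f x = f [set x; y].
    rewrite /wdeg (big_pred1 y) // => u /=.
    case: (u =P y) => [->|/eqP nuy]; first by rewrite esym eyx.
    case eu: (e x u) => //; exfalso.
    have lt := implyP ((forallP o2) u); rewrite eu nuy in lt; have {}lt := lt isT.
    case: (ltngtP (r u) (r x)) => h.
    - by have := b1 x u y eu h; rewrite esym eyx => /(_ isT ryx) E; rewrite E eqxx in nuy.
    - by have := gt_t (u := x) (z := u) (ltn_trans rqy ryx) (ltnW h) eu; lia.
    - by have := e_rneq eu; rewrite h eqxx.
  by rewrite setUC subrr.
apply/eqP; rewrite size_eq0; apply/eqP.
rewrite (eq_in_filter (a2 := xpred0)) ?filter_pred0 // => z /H ->; by rewrite eqxx.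
Qed.


Lemma step_edge : exists f', Inv t.+1 f'.
Proof.
set L := Lend q y ++ Lend y q ++ Pend q y ++ Pend y q.
have hcount : 1 + size [seq x <- L | x != 0%R] < size s.
  rewrite /L !filter_cat !size_cat.
  set n1 := size [seq x <- Lend q y | _]; set n2 := size [seq x <- Lend y q | _].
  set n3 := size [seq x <- Pend q y | _]; set n4 := size [seq x <- Pend y q | _].
  have d2 := maxdeg_ge2; have k2 := k_ge2; have dq := deg_max q.
  have h3 : n3 <= 1 by apply: leq_trans (size_filter_le _) (C3 _ _).
  have h4 : n4 <= 1 by apply: leq_trans (size_filter_le _) (C3 _ _).
  have h4' : k <= 2 -> n4 = 0 by exact: C6.
  apply: (leq_trans _ s_size).
  case: (boolP (fin t.+1 q)) => fq; case: (boolP (fin t.+1 y)) => fy.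
  - have h1 : n1 <= deg e q - 1 := C1 endp_qy fq; have h2 : n2 <= deg e y - 1 := C1 endp_yq fy; have h5 := C5 fy.
    have e3 : n3 = 0 by rewrite /n3 (C4 endp_qy fq).
    have e4 : n4 = 0 by rewrite /n4 (C4 endp_yq fy).
    lia.
  - have h1 : n1 <= deg e q - 1 := C1 endp_qy fq.
    have e2 : n2 = 0 by rewrite /n2 (C2 _ fy).
    have e3 : n3 = 0 by rewrite /n3 (C4 endp_qy fq).
    case: (leqP k 2) => hk; [have := h4' hk|]; lia.
  - have h2 : n2 <= deg e y - 1 := C1 endp_yq fy; have h5 := C5 fy.
    have e1 : n1 = 0 by rewrite /n1 (C2 _ fq).
    have e4 : n4 = 0 by rewrite /n4 (C4 endp_yq fy).
    lia.
  - have e1 : n1 = 0 by rewrite /n1 (C2 _ fq).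
    have e2 : n2 = 0 by rewrite /n2 (C2 _ fy).
    case: (leqP k 2) => hk; [have := h4' hk|]; lia.
have [a [ain a0 na]] := pigeon hcount.
exists (upd a); apply: (inv_step a0).
- move=> p o /orP[] /andP[/eqP -> /eqP ->]; apply: contra na; rewrite /L !mem_cat => ->;
    by rewrite ?orbT.
- move=> p o /orP[] /andP[/eqP -> /eqP ->]; apply: contra na; rewrite /L !mem_cat => ->;
    by rewrite ?orbT.
Qed.

End Step.

Lemma all_inv t : exists f, Inv t f.
Proof.
elim: t => [|t [f Hf]]; first by exists (fun _ => 0%R); exact: base.
case: (boolP [exists q, exists y, [&& e q y, r q < r y & eid q y == t]]).
  case/existsP => q /existsP[y /and3P[eqy rqy /eqP teq]].
  exact: (step_edge eqy rqy teq Hf).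
move=> H; exists f; apply: noedge_step Hf => u v euv; apply/eqP => E; move/negP: H; apply.
case: (ltngtP (r u) (r v)) => h.
- by apply/existsP; exists u; apply/existsP; exists v; rewrite euv h E eqxx.
- by apply/existsP; exists v; apply/existsP; exists u; rewrite esym euv h eidC E eqxx.
- by have := e_rneq euv; rewrite h eqxx.
Qed.

Lemma main_sec : exists f : {set T} -> G,
    (forall u v, e u v -> f [set u; v] != 0%R) /\
    (forall v, v \in M -> wdeg e f v != 0%R) /\
    (forall u v, e u v -> u \notin M -> v \notin M -> wdeg e f u != wdeg e f v).
Proof.
have [f [I1 I2 I3 _]] := all_inv (N * N).
have F v : fin (N * N) v by apply/forallP => z; apply/implyP => _; exact: eid_bound.
exists f; split; last split.
- by move=> u v euv; apply: I1 => //; exact: eid_bound.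
- by move=> v; apply: I2.
- by move=> u v euv; apply: I3.
Qed.

End Main.

Lemma order_ex (T : finType) (e : rel T) (k : nat) : symmetric e -> irreflexive e ->
  every_subgraph_mindeg_lt e k -> forall n (S : {set T}), #|S| = n ->
  exists s : seq T, [/\ uniq s, (forall v, (v \in s) = (v \in S)) &
    forall v, v \in s -> #|[set z | [&& e v z, z \in s & index z s < index v s]]| < k].
Proof.
move=> esym eirr H; elim=> [|n IH] S hS.
  exists [::]; split => // v; by rewrite (cards0_eq hS) in_set0.
have Sn : S != set0 by rewrite -card_gt0 hS.
pose F := fun a b => [&& e a b, a \in S & b \in S].
have sub : is_subgraph e S F.
  split=> //; split.
  - by move=> a b; rewrite /F (esym a b) (andbC (a \in S)).
  - by move=> a b /and3P[-> -> ->].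
have [x xS hx] := H S F sub.
have hS' : #|S :\ x| = n by move: hS; rewrite (cardsD1 x) xS add1n => -[].
have [s' [u' m' b']] := IH _ hS'.
have xs' : x \notin s' by rewrite m' !inE eqxx.
exists (rcons s' x); split.
- by rewrite rcons_uniq xs' u'.
- by move=> v; rewrite mem_rcons inE m' in_setD1; case: (v =P x) => // ->.
move=> v; rewrite -cats1 mem_cat inE orbC; case: (v =P x) => [->|/eqP nvx] /= vs.
  apply: leq_ltn_trans _ hx; apply: subset_leq_card; apply/subsetP => z.
  rewrite !inE => /and3P[exz zs _]; rewrite /F exz xS /=.
  move: zs; rewrite mem_cat inE; case/orP => [|/eqP Ez]; last by rewrite Ez eirr in exz.
  by rewrite m' in_setD1 andbb => /andP[].
apply: leq_ltn_trans (b' v vs); apply: subset_leq_card; apply/subsetP => z.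
rewrite !inE => /and3P[evz zs]; rewrite !index_cat vs.
case: ifP => zs' /=; first by rewrite evz.
have := index_mem v s'; rewrite vs => hv h; exfalso; move: h; by rewrite ltnNge (leq_trans (ltnW hv) (leq_addr _ _)).
Qed.

Theorem theorem4 (T : finType) (e : rel T) (M : {set T}) (G : zmodType) (c : nat) :
  simple_graph e ->
  3 <= #|T| ->
  (forall x : T, 3 <= #|[set y | connect e x y]|) ->
  is_coloring_number e c ->
  (exists s : seq G, uniq s /\ maxdeg e + c - 1 <= size s) ->
  exists f : {set T} -> G,
    (forall u v, e u v -> f [set u; v] != 0%R) /\
    (forall v, v \in M -> wdeg e f v != 0%R) /\
    (forall u v, e u v -> u \notin M -> v \notin M -> wdeg e f u != wdeg e f v).
Proof.
move=> [esym eirr] hT comp [Hc _] [sG [us ss]].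
have [s0 [u0 m0 b0]] := order_ex esym eirr Hc (erefl #|[set: T]|).
have x0 : T.
  case: (pickP (@predT T)) => [x _|H]; first exact: x.
  exfalso; move: hT; rewrite eq_card0 //.
have mem0 v : v \in s0 by rewrite m0 in_setT.
apply: (@main_sec T e G M c esym eirr comp (fun v => index v s0) (size s0) _ _ _ sG x0 us ss).
- by move=> a b E; exact: (@index_inj T x0 s0 a b (mem0 a) (mem0 b) E).
- by move=> v; rewrite index_mem.
- move=> v; apply: leq_ltn_trans (b0 v (mem0 v)); apply: subset_leq_card; apply/subsetP => z.
  by rewrite !inE mem0.
Qed.
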